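(* Let $G=(V,E)$ be an unoriented connected graph (at most countable vertex set, locally finite, multiple edges allowed), let $s\in V$ be a vertex of finite degree $D$, and let $Z\subset V$ be a finite set with $s\notin Z$. Let $0<a\leq b$ and let the resistances $(r_e)_{e\in E}$ be independent, each distributed according to $\frac12\delta_a+\frac12\delta_b$. Then $$\operatorname{Var}\big(\mathcal{R}_r(s\leftrightarrow Z)\big)\geq C(b-a)^2,$$ where $C>0$ is a constant depending only on $D$.
   Context: A flow from $\{s\}$ to $Z$ of strength $1$ is an antisymmetric function $\theta$ on oriented edges ($\theta(\overrightarrow{xy})=-\theta(\overrightarrow{yx})$) satisfying the node law $\sum_{y\sim x}\theta(\overrightarrow{xy})=0$ at every $x\notin \{s\}\cup Z$, with net outflow $1$ at $s$ and net inflow $1$ into $Z$ (vertices of $Z$ treated as one vertex). The effective resistance is $\mathcal{R}_r(s\leftrightarrow Z)=\inf_\theta\sum_{e\in E}r_e\theta(e)^2$ over such flows. *)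

(* Defs.v *)
From HB Require Import structures.
From Stdlib Require Import Relations.
From mathcomp Require Import all_boot all_order all_algebra.
From mathcomp Require Import all_classical all_reals all_analysis.
Set Implicit Arguments. Unset Strict Implicit. Unset Printing Implicit Defensive.
Import Order.TTheory GRing.Theory Num.Theory.
Local Open Scope classical_set_scope.
Local Open Scope ring_scope.

(* A multigraph on vertex type V with edge type E: each (unoriented) edge e
   has two endpoints; [ends e] fixes an arbitrary reference orientation
   (ends e).1 -> (ends e).2.  An antisymmetric function on oriented edges is
   the same as a function theta : E -> R giving the flow along the reference
   orientation (the flow along the reverse orientation being -theta e). *)

Section Graph.
Variables (V E : choiceType) (ends : E -> V * V).

Definition incident (x : V) (e : E) : Prop := (ends e).1 = x \/ (ends e).2 = x.

Definition locally_finite : Prop := forall x, finite_set [set e | incident x e].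

Definition no_loops : Prop := forall e, (ends e).1 <> (ends e).2.

Definition adjacent (x y : V) : Prop :=
  exists e, ends e = (x, y) \/ ends e = (y, x).

Definition connected_graph : Prop :=
  forall x y, clos_refl_trans V adjacent x y.

Definition has_degree (x : V) (D : nat) : Prop := ([set e | incident x e] #= `I_D)%card.

Variable R : realType.

Definition netout (theta : E -> R) (x : V) : R :=
  (\sum_(e \in [set e | (ends e).1 = x]) theta e
   - \sum_(e \in [set e | (ends e).2 = x]) theta e)%R.

(* flow of strength 1 from {s} to Z (Z treated as one vertex) *)
Definition unit_flow (s : V) (Z : set V) (theta : E -> R) : Prop :=
  [/\ netout theta s = 1,
      (forall x, x <> s -> ~ Z x -> netout theta x = 0) &
      (\sum_(z \in Z) netout theta z = -1)%R].

Definition energy (r : E -> R) (theta : E -> R) : \bar R :=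
  (\esum_(e in [set: E]) ((r e * theta e ^+ 2)%:E))%E.

Definition eff_res (r : E -> R) (s : V) (Z : set V) : \bar R :=
  ereal_inf [set energy r theta | theta in [set theta | unit_flow s Z theta]].

End Graph.

Section Proba.
Context (R : realType) (d : measure_display) (T : measurableType d).
Variable P : probability T R.

Definition mutually_independent (I : choiceType) (X : I -> T -> R) : Prop :=
  forall (F : seq I) (B : I -> set R),
    uniq F -> (forall i, measurable (B i)) ->
    P (\bigcap_(i in [set` F]) (X i @^-1` B i)) =
    (\prod_(i <- F) P (X i @^-1` B i))%E.

Definition has_law_two_point (X : T -> R) (a b : R) : Prop :=
  forall B : set R, measurable B ->
    P (X @^-1` B) = ((2^-1)%:E * \d_a B + (2^-1)%:E * \d_b B)%E.

End Proba.

(* Main.v *)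
Require Import Defs.
Set Warnings "-notation-overridden,-ambiguous-paths,-notation-incompatible-prefix".
From HB Require Import structures.
From Stdlib Require Import Relations.
From mathcomp Require Import all_boot all_order all_algebra.
From mathcomp Require Import all_classical all_reals all_analysis.
From mathcomp Require Import finmap ring lra.
Import Order.TTheory GRing.Theory Num.Theory.
Local Open Scope classical_set_scope.
Local Open Scope ring_scope.
Set Implicit Arguments. Unset Strict Implicit.

Section ListLemmas.
Variable R : realType.

Lemma sum_sub_uniq (T : eqType) (f : T -> R) (l1 l2 : seq T) :
  uniq l1 -> uniq l2 -> {subset l1 <= l2} -> (forall x, 0 <= f x) ->
  \sum_(i <- l1) f i <= \sum_(i <- l2) f i.
Proof.
move=> u1 u2 s12 f0.
rewrite [X in _ <= X](bigID (fun i => i \in l1)) /=.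
have -> : \sum_(i <- l2 | i \in l1) f i = \sum_(i <- l1) f i.
  rewrite -big_filter; apply: perm_big; apply: uniq_perm.
  - exact: filter_uniq.
  - exact: u1.
  - by move=> x; rewrite mem_filter; apply/andP/idP => [[]//|h]; split => //; apply: s12.
by rewrite lerDl sumr_ge0.
Qed.

Variable T : choiceType.
Implicit Types (g : T -> R).

Lemma esum_ge_seq g (l : seq T) : (forall x, 0 <= g x) -> uniq l ->
  ((\sum_(i <- l) g i)%:E <= \esum_(i in [set: T]) (g i)%:E)%E.
Proof.
move=> g0 ul; apply: esum_ge; exists [set` l].
  by split => //; exact: finite_seq.
by rewrite -fsbig_seq // sumEFin.
Qed.

Lemma esum_le_seq g (x : R) : (forall x, 0 <= g x) ->
  (forall l : seq T, uniq l -> \sum_(i <- l) g i <= x) ->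
  (\esum_(i in [set: T]) (g i)%:E <= x%:E)%E.
Proof.
move=> g0 H; apply: ge_ereal_sup => _ [X [finX _] <-].
rewrite fsbig_finite // sumEFin lee_fin; apply: H.
exact: fset_uniq.
Qed.

Lemma esum_gt_seq g (x : R) : (forall x, 0 <= g x) ->
  (x%:E < \esum_(i in [set: T]) (g i)%:E)%E ->
  exists l : seq T, uniq l /\ x < \sum_(i <- l) g i.
Proof.
move=> g0 /ereal_sup_gt [_ [X [finX _] <-]].
rewrite fsbig_finite // sumEFin lte_fin => h.
by exists (fset_set X); split => //; exact: fset_uniq.
Qed.

Lemma esum_ge0' g : (forall x, 0 <= g x) -> (0 <= \esum_(i in [set: T]) (g i)%:E)%E.
Proof. by move=> g0; apply: esum_ge0 => x _; rewrite lee_fin. Qed.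

End ListLemmas.
Section Graph1.
Variables (V E : choiceType) (ends : E -> V * V) (R : realType).
Hypothesis lf : locally_finite ends.

Definition out_l (x : V) : seq E := fset_set [set e | (ends e).1 = x].
Definition in_l (x : V) : seq E := fset_set [set e | (ends e).2 = x].

Lemma fin_out x : finite_set [set e | (ends e).1 = x].
Proof. by apply: sub_finite_set (lf x) => e /= h; left. Qed.
Lemma fin_in x : finite_set [set e | (ends e).2 = x].
Proof. by apply: sub_finite_set (lf x) => e /= h; right. Qed.

Lemma netoutE (th : E -> R) x : netout ends th x =
  \sum_(e <- out_l x) th e - \sum_(e <- in_l x) th e.
Proof. by rewrite /netout !fsbig_finite //; [exact: fin_in| exact: fin_out]. Qed.

Lemma mem_out x e : (e \in out_l x) = ((ends e).1 == x).
Proof. by rewrite /out_l in_fset_set; [apply/idP/eqP; rewrite in_setE|exact: fin_out]. Qed.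
Lemma mem_in x e : (e \in in_l x) = ((ends e).2 == x).
Proof. by rewrite /in_l in_fset_set; [apply/idP/eqP; rewrite in_setE|exact: fin_in]. Qed.
Lemma uniq_out x : uniq (out_l x). Proof. exact: fset_uniq. Qed.
Lemma uniq_in x : uniq (in_l x). Proof. exact: fset_uniq. Qed.

Lemma sum_ind_uniq (T : eqType) (l : seq T) (f : T) : uniq l ->
  \sum_(e <- l) (e == f)%:R = (f \in l)%:R :> R.
Proof.
elim: l => [|a l IH] /=; first by rewrite big_nil.
move=> /andP[al ul]; rewrite big_cons IH // in_cons.
case: (eqVneq a f) => [<-|_] /=; last by rewrite add0r.
by rewrite (negbTE al) addr0.
Qed.

Definition ind (f : E) : E -> R := fun e => (e == f)%:R.

Lemma netout_ind f x : netout ends (ind f) x =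
  ((ends f).1 == x)%:R - ((ends f).2 == x)%:R.
Proof.
by rewrite netoutE /ind !sum_ind_uniq ?uniq_out ?uniq_in // mem_out mem_in.
Qed.

Lemma netout_lin (th1 th2 : E -> R) (c : R) x :
  netout ends (fun e => th1 e + c * th2 e) x =
  netout ends th1 x + c * netout ends th2 x.
Proof.
rewrite !netoutE !big_split /= -!mulr_sumr; ring.
Qed.

Lemma netout0 x : netout ends (fun _ => 0 : R) x = 0.
Proof. by rewrite netoutE !big1 ?subr0. Qed.

Lemma path_flow y z : clos_refl_trans_1n V (Defs.adjacent ends) y z ->
  exists (th : E -> R) (K : seq E), [/\ uniq K,
    (forall e, e \notin K -> th e = 0) &
    forall x, netout ends th x = (x == y)%:R - (x == z)%:R].
Proof.
elim => {y z} [y|y w z [e he] _ [th [K [uK thK hn]]]].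
  exists (fun _ => 0), [::]; split => // x.
  by rewrite netout0 subrr.
pose sg : R := if ends e == (y, w) then 1 else -1.
exists (fun f => th f + sg * ind e f), (undup (e :: K)); split.
- exact: undup_uniq.
- move=> f; rewrite mem_undup in_cons negb_or => /andP[fe fK].
  by rewrite thK // /ind (negbTE fe) mulr0 addr0.
- move=> x; rewrite netout_lin hn netout_ind /sg.
  case: he => he; rewrite he /=.
    rewrite eqxx ![_ == x]eq_sym; ring.
  case: (eqVneq (w, y) (y, w)) => [[-> _]|_]; rewrite ![_ == x]eq_sym; ring.
Qed.

End Graph1.
Section Energy.
Variables (V E : choiceType) (ends : E -> V * V) (R : realType).
Hypothesis lf : locally_finite ends.
Variables (s : V) (Z : set V).

Local Notation F rho := (eff_res ends rho s Z).

Lemma energy_ge0 (rho th : E -> R) : (forall e, 0 <= rho e) ->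
  (0 <= energy rho th)%E.
Proof. by move=> h; apply: esum_ge0' => e; rewrite mulr_ge0 // sqr_ge0. Qed.

Lemma energy_le (rho rho' th : E -> R) : (forall e, rho e <= rho' e) ->
  (energy rho th <= energy rho' th)%E.
Proof.
by move=> h; apply: le_esum => e _; rewrite lee_fin ler_wpM2r // sqr_ge0.
Qed.

Lemma eff_res_ge0 (rho : E -> R) : (forall e, 0 <= rho e) -> (0 <= F rho)%E.
Proof.
move=> h; apply: le_ereal_inf_tmp => _ [th _ <-]; exact: energy_ge0.
Qed.

Lemma eff_res_le_energy (rho th : E -> R) : unit_flow ends s Z th ->
  (F rho <= energy rho th)%E.
Proof. by move=> u; apply: ereal_inf_lbound; exists th. Qed.

Lemma eff_res_mono (rho rho' : E -> R) : (forall e, rho e <= rho' e) ->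
  (F rho <= F rho')%E.
Proof.
move=> h; apply: le_ereal_inf_tmp => _ [th u <-].
apply: le_trans (eff_res_le_energy rho u) _; exact: energy_le.
Qed.

Lemma energy_finsupp (rho th : E -> R) (K : seq E) : uniq K ->
  (forall e, e \notin K -> th e = 0) -> (forall e, 0 <= rho e) ->
  (energy rho th <= (\sum_(e <- K) rho e * th e ^+ 2)%:E)%E.
Proof.
move=> uK hK h0; apply: esum_le_seq => [e|l ul]; first by rewrite mulr_ge0 // sqr_ge0.
rewrite (bigID (fun e => e \in K)) /= [X in _ + X]big1 ?addr0; last first.
  by move=> e /hK ->; rewrite expr0n /= mulr0.
rewrite -big_filter; apply: sum_sub_uniq => //.
- exact: filter_uniq.
- by move=> e; rewrite mem_filter => /andP[].
- by move=> e; rewrite mulr_ge0 // sqr_ge0.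
Qed.

Lemma exists_flow : connected_graph ends -> finite_set Z -> Z !=set0 -> ~ Z s ->
  exists (th : E -> R) (K : seq E), [/\ uniq K,
    (forall e, e \notin K -> th e = 0) & unit_flow ends s Z th].
Proof.
move=> cg fZ [z0 Zz0] nZs.
have h1 := clos_rt_rt1n _ _ _ _ (cg s z0).
have [th [K [uK hK hn]]] := @path_flow _ _ ends R lf _ _ h1.
exists th, K; split => //; split.
- rewrite hn eqxx; have -> : (s == z0) = false.
    by apply/eqP => sz; apply: nZs; rewrite sz.
  by rewrite subr0.
- move=> x xs nZx; rewrite hn; have -> : (x == s) = false by apply/eqP.
  have -> : (x == z0) = false by apply/eqP => xz; apply: nZx; rewrite xz.
  by rewrite subrr.
- rewrite fsbig_finite //.
  under eq_bigr do rewrite hn.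
  rewrite sumrB !sum_ind_uniq ?fset_uniq // !in_fset_set //.
  rewrite (memNset nZs) (mem_set Zz0) /=; ring.
Qed.

Lemma eff_res_fin (rho : E -> R) : connected_graph ends -> finite_set Z ->
  Z !=set0 -> ~ Z s -> (forall e, 0 <= rho e) -> F rho \is a fin_num.
Proof.
move=> cg fZ nZ nZs h0.
have [th [K [uK hK u]]] := exists_flow cg fZ nZ nZs.
rewrite ge0_fin_numE; last exact: eff_res_ge0.
apply: le_lt_trans (eff_res_le_energy rho u) _.
apply: le_lt_trans (energy_finsupp uK hK h0) _.
exact: ltry.
Qed.

End Energy.
Section Incr.
Variables (V E : choiceType) (ends : E -> V * V) (R : realType).
Hypothesis lf : locally_finite ends.
Hypothesis nl : no_loops ends.
Variables (s : V) (Z : set V).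
Variable sS : seq E.
Hypothesis usS : uniq sS.
Hypothesis memS : forall e, (e \in sS) = ((ends e).1 == s) || ((ends e).2 == s).
Local Notation D := (size sS).
Hypothesis D0 : (0 < D)%N.

Local Notation F rho := (eff_res ends rho s Z).

Lemma sum_lt (T : eqType) (l : seq T) (f g : T -> R) : l != [::] ->
  (forall x, x \in l -> f x < g x) -> \sum_(i <- l) f i < \sum_(i <- l) g i.
Proof.
elim: l => [//|a l IH] _ h; rewrite !big_cons.
case: (eqVneq l [::]) => [->|ln]; first by rewrite !big_nil !addr0 h // mem_head.
apply: ltrD; first by apply: h; rewrite mem_head.
by apply: IH => // x xl; apply: h; rewrite in_cons xl orbT.
Qed.

Lemma lerNnorm (x : R) : - x <= `|x|.
Proof. by rewrite -normrN ler_norm. Qed.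

Lemma big_edge (th : E -> R) : unit_flow ends s Z th ->
  exists2 e0, e0 \in sS & D%:R^-1 <= `|th e0|.
Proof.
move=> [h1 _ _].
case: (pselect (exists2 e0 : E, e0 \in sS & D%:R^-1 <= `|th e0|)) => // hn; exfalso.
have hlt : forall e, e \in sS -> `|th e| < D%:R^-1.
  move=> e eS; rewrite ltNge; apply/negP => he; apply: hn; by exists e.
rewrite (netoutE lf) in h1.
have : 1 <= \sum_(e <- out_l ends s ++ in_l ends s) `|th e|.
  rewrite big_cat /= -h1; apply: lerD.
    by apply: le_trans (ler_norm _) _; exact: ler_norm_sum.
  apply: le_trans (lerNnorm _) _.
  exact: ler_norm_sum.
have hsub : \sum_(e <- out_l ends s ++ in_l ends s) `|th e| <= \sum_(e <- sS) `|th e|.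
  apply: sum_sub_uniq => //.
  - rewrite cat_uniq uniq_out uniq_in /= andbT; apply/hasPn => e.
    rewrite mem_in // => /eqP e2; apply/negP; rewrite mem_out // => /eqP e1.
    by apply: (nl (e:=e)); rewrite e1 e2.
  - by move=> e; rewrite mem_cat mem_out // mem_in // memS.
have hl : \sum_(e <- sS) `|th e| < \sum_(e <- sS) D%:R^-1.
  apply: sum_lt => //; by case: sS D0.
rewrite big_const_seq count_predT iter_addr_0 in hl.
have : D%:R^-1 *+ D = 1 :> R.
  rewrite -[RHS](@mulVf _ D%:R) ?mulr_natr // pnatr_eq0 -lt0n //.
move=> e1; rewrite e1 in hl; move=> h; have := le_lt_trans (le_trans h hsub) hl.
by rewrite ltxx.
Qed.

Lemma eff_res_incr (rho rho' : E -> R) (c : R) : (forall e, 0 <= rho e) ->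
  (forall e, rho e <= rho' e) -> (forall e, e \in sS -> rho e + c <= rho' e) ->
  0 <= c -> (F rho + (c * D%:R^-2)%:E <= F rho')%E.
Proof.
move=> h0 hle hS c0; apply: le_ereal_inf_tmp => _ [th u <-].
have [e0 e0S he0] := big_edge u.
have h0' : forall e, 0 <= rho' e by move=> e; apply: le_trans (h0 e) (hle e).
have := energy_ge0 th h0'.
case E1 : (energy rho' th) => [M|//|//] M0; last by rewrite leey.
set k := c * D%:R^-2.
have hk : k <= (rho' e0 - rho e0) * th e0 ^+ 2.
  rewrite /k; apply: ler_pM; rewrite ?exprn_ge0 ?invr_ge0 ?ler0n //.
    by rewrite lerBrDl; apply: hS.
  have -> : th e0 ^+ 2 = `|th e0| ^+ 2 by rewrite real_normK ?num_real.
  rewrite -exprVn.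
  have t0 : 0 <= D%:R^-1 :> R by rewrite invr_ge0 ler0n.
  move: he0 t0; set t := D%:R^-1; set uu := `|th e0|; move=> *; nra.
have hE : (energy rho th <= (M - k)%:E)%E.
  apply: esum_le_seq => [e|l ul]; first by rewrite mulr_ge0 // sqr_ge0.
  set l' := undup (e0 :: l).
  have ul' : uniq l' by exact: undup_uniq.
  have s1 : \sum_(e <- l) rho e * th e ^+ 2 <= \sum_(e <- l') rho e * th e ^+ 2.
    apply: sum_sub_uniq => //; last by move=> e; rewrite mulr_ge0 // sqr_ge0.
    by move=> e el; rewrite mem_undup in_cons el orbT.
  have s2 : (rho' e0 - rho e0) * th e0 ^+ 2 <=
      \sum_(e <- l') (rho' e - rho e) * th e ^+ 2.
    have -> : (rho' e0 - rho e0) * th e0 ^+ 2 =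
       \sum_(e <- [:: e0]) (rho' e - rho e) * th e ^+ 2 by rewrite big_seq1.
    apply: sum_sub_uniq => //.
      by move=> e; rewrite mem_seq1 => /eqP ->; rewrite mem_undup mem_head.
    by move=> e; rewrite mulr_ge0 ?sqr_ge0 // subr_ge0.
  have s3 : \sum_(e <- l') rho' e * th e ^+ 2 <= M.
    rewrite -lee_fin -E1 /energy; apply: (@esum_ge_seq R E (fun e => rho' e * th e ^+ 2) l') => //.
    by move=> e; rewrite mulr_ge0 // sqr_ge0.
  have : \sum_(e <- l') rho' e * th e ^+ 2 = \sum_(e <- l') rho e * th e ^+ 2 +
     \sum_(e <- l') (rho' e - rho e) * th e ^+ 2.
    by rewrite -big_split /=; apply: eq_bigr => e _; ring.
  move=> eq1; rewrite eq1 in s3; lra.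
apply: le_trans (_ : ((M - k)%:E + k%:E <= M%:E)%E); last by rewrite -EFinD subrK.
apply: leeD => //; apply: le_trans hE; exact: eff_res_le_energy.
Qed.

End Incr.
Section Trunc.
Variables (V E : choiceType) (ends : E -> V * V) (R : realType).
Variables (s : V) (Z : set V) (a b : R).
Hypothesis a0 : 0 < a.
Hypothesis ab : a <= b.

Local Notation F rho := (eff_res ends rho s Z).

Definition trunc (l : seq E) (rho : E -> R) : E -> R :=
  fun e => if e \in l then rho e else b.

Lemma trunc_lt (rho : E -> R) (c : R) : (forall e, a <= rho e <= b) ->
  (F rho < c%:E)%E -> exists l : seq E, (F (trunc l rho) < c%:E)%E.
Proof.
move=> hr /ereal_inf_lt [_ [th u <-]] hc.
have r0 : forall e, 0 <= rho e.
  by move=> e; have /andP[h _] := hr e; apply: le_trans (ltW a0) h.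
have g0 : forall e, 0 <= rho e * th e ^+ 2 by move=> e; rewrite mulr_ge0 // sqr_ge0.
have := energy_ge0 th r0.
move: hc; case E1 : (energy rho th) => [e0| |] //= hc e00.
rewrite lte_fin in hc; rewrite lee_fin in e00.
set q := b / a.
have q1 : 1 <= q by rewrite /q ler_pdivlMr // mul1r.
set eta := (c - e0) / (2 * q).
have eta0 : 0 < eta by rewrite /eta divr_gt0 // ?subr_gt0 // mulr_gt0 // (lt_le_trans ltr01 q1).
have qeta : q * eta = (c - e0) / 2.
  have qn0 : q != 0 by apply: lt0r_neq0; exact: lt_le_trans ltr01 q1.
  by rewrite /eta; field.
have : ((e0 - eta)%:E < \esum_(i in [set: E]) (rho i * th i ^+ 2)%:E)%E.
  by rewrite -/(energy rho th) E1 lte_fin ltrBlDr ltrDl.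
move=> /(esum_gt_seq g0) [K [uK hK]].
exists K.
apply: le_lt_trans (eff_res_le_energy (trunc K rho) u) _.
apply: le_lt_trans (_ : ((e0 + q * eta)%:E < c%:E)%E); last first.
  by rewrite lte_fin qeta; lra.
apply: esum_le_seq => [e|l ul].
  rewrite /trunc; case: ifP => _ //; rewrite mulr_ge0 ?sqr_ge0 //.
  exact: le_trans (ltW a0) ab.
rewrite (bigID (fun e => e \in K)) /=.
have -> : \sum_(i <- l | i \in K) trunc K rho i * th i ^+ 2 =
    \sum_(i <- l | i \in K) rho i * th i ^+ 2.
  by apply: eq_bigr => e eK; rewrite /trunc eK.
have h2 : \sum_(i <- l | i \notin K) trunc K rho i * th i ^+ 2 <=
    q * \sum_(i <- l | i \notin K) rho i * th i ^+ 2.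
  rewrite mulr_sumr; apply: ler_sum => e eK; rewrite /trunc (negbTE eK) mulrA.
  apply: ler_wpM2r; first exact: sqr_ge0.
  have /andP[h _] := hr e.
  have rp : 0 < rho e by exact: lt_le_trans a0 h.
  rewrite /q -ler_pdivrMr // ler_wpM2l ?lef_pV2 ?posrE //.
  exact: le_trans (ltW a0) ab.
have hA : \sum_(i <- l | i \in K) rho i * th i ^+ 2 +
    \sum_(i <- l | i \notin K) rho i * th i ^+ 2 <= e0.
  have -> : \sum_(i <- l | i \in K) rho i * th i ^+ 2 +
    \sum_(i <- l | i \notin K) rho i * th i ^+ 2 = \sum_(i <- l) rho i * th i ^+ 2.
    by rewrite [RHS](bigID (fun e => e \in K)).
  rewrite -lee_fin -E1; exact: (@esum_ge_seq R E _ l).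
have hB : \sum_(i <- l | i \notin K) rho i * th i ^+ 2 +
    \sum_(i <- K) rho i * th i ^+ 2 <= e0.
  rewrite -big_filter -big_cat -lee_fin -E1.
  apply: (@esum_ge_seq R E _ _ g0).
  rewrite cat_uniq filter_uniq // uK /= andbT; apply/hasPn => e eK.
  by rewrite mem_filter eK.
have hC : 0 <= \sum_(i <- l | i \notin K) rho i * th i ^+ 2 by apply: sumr_ge0.
move: hA hB hC h2 hK q1 eta0.
set A1 := \sum_(i <- l | i \in K) _.
set A2 := \sum_(i <- l | i \notin K) rho i * th i ^+ 2.
set A3 := \sum_(i <- l | i \notin K) _.
set SK := \sum_(i <- K) _.
move=> *; nra.
Qed.

End Trunc.
Section IntLB.
Context (R : realType) (d : measure_display) (T : measurableType d).
Variable P : probability T R.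

Lemma integral_lb (f : T -> R) (U : set T) (k : R) : measurable U -> 0 <= k ->
  (forall w, 0 <= f w) -> (forall w, U w -> k <= f w) ->
  (k%:E * P U <= \int[P]_w (f w)%:E)%E.
Proof.
move=> mU k0 f0 hU.
rewrite ge0_integralTE; last by move=> w; rewrite lee_fin.
apply: ereal_sup_ubound; exists (scale_nnsfun (indic_nnsfun R mU) k0).
  move=> w /=; rewrite lee_fin measurable_realfun.mindicE /indic.
  by case: (boolP (w \in U)) => [/set_mem /hU|_]; rewrite ?mulr1 ?mulr0.
rewrite (_ : sintegral P _ = sintegral P (cst k \* (HBNNSimple.NonNegSimpleFun.sort (indic_nnsfun R mU)))%R) //.
rewrite sintegralrM; congr (_ * _)%E.
by rewrite (_ : sintegral P _ = sintegral P \1_U) ?sintegral_indic //.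
Qed.

End IntLB.
Section Indep.
Context (R : realType) (d : measure_display) (T : measurableType d).
Variable P : probability T R.
Variables (E : countType) (r : E -> T -> R) (sS : seq E).
Hypothesis usS : uniq sS.
Hypothesis meas : forall e, measurable_fun setT (r e).
Hypothesis indep : mutually_independent P r.

Lemma finP A : measurable A -> P A \is a fin_num.
Proof.
move=> mA; rewrite ge0_fin_numE ?measure_ge0 //.
exact: le_lt_trans (probability_le1 P mA) (ltry _).
Qed.

Definition cylF (l : seq E) (B : E -> set R) : set T :=
  \bigcap_(e in [set` l]) (r e @^-1` B e).

Lemma mem_cylF w l B : cylF l B w <-> (forall e, e \in l -> B e (r e w)).
Proof. by []. Qed.

Lemma meas_pre e (B : set R) : measurable B -> measurable (r e @^-1` B).
Proof. by move=> mB; rewrite -[X in measurable X]setTI; exact: meas. Qed.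

Lemma meas_cylF l B : (forall e, measurable (B e)) -> measurable (cylF l B).
Proof.
move=> mB; elim: l => [|e l IH].
  have -> : cylF [::] B = setT by apply/seteqP; split => // w _ e.
  exact: measurableT.
have -> : cylF (e :: l) B = r e @^-1` B e `&` cylF l B.
  apply/seteqP; split => w.
    by move=> h; split; [apply: h; rewrite /= mem_head|move=> f fl; apply: h; rewrite /= in_cons fl orbT].
  move=> [h1 h2] f; rewrite /= in_cons => /orP[/eqP ->//|fl]; exact: h2.
by apply: measurableI => //; exact: meas_pre.
Qed.

Definition GY : set (set T) := [set C | exists (l : seq E) (B : E -> set R),
  [/\ uniq l, (forall e, e \in l -> e \notin sS), (forall e, measurable (B e)) &
      C = cylF l B]].

Definition SY := <<s GY>>.

Lemma GY_setI : setI_closed GY.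
Proof.
move=> _ _ [l1 [B1 [u1 n1 m1 ->]]] [l2 [B2 [u2 n2 m2 ->]]].
exists (undup (l1 ++ l2)), (fun e => (if e \in l1 then B1 e else setT) `&`
                                   (if e \in l2 then B2 e else setT)); split.
- exact: undup_uniq.
- by move=> e; rewrite mem_undup mem_cat => /orP[/n1|/n2].
- move=> e; apply: measurableI; case: ifP => _ //; exact: measurableT.
- apply/seteqP; split => w.
    move=> [h1 h2] e; rewrite /= mem_undup mem_cat => _.
    by split; case: ifP => // el; [apply: h1|apply: h2].
  move=> h; split => e el /=.
    have := h e; rewrite /= mem_undup mem_cat el /=.
    by move=> /(_ isT) [].
  have := h e; rewrite /= mem_undup mem_cat el orbT.
  by move=> /(_ isT) [_].
Qed.

Lemma SY_sigma : sigma_algebra setT SY.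
Proof. exact: smallest_sigma_algebra. Qed.

Lemma SY_GY C : GY C -> SY C.
Proof. exact: sub_sigma_algebra. Qed.

Lemma SY_setC C : SY C -> SY (~` C).
Proof. by move=> h; rewrite -setTD; case: SY_sigma => _ hC _; exact: hC. Qed.

Lemma SY_bigcup (F : (set T)^nat) : (forall n, SY (F n)) -> SY (\bigcup_n F n).
Proof. by case: SY_sigma => _ _ hU; exact: hU. Qed.

Lemma SY_set0 : SY set0.
Proof. by case: SY_sigma. Qed.

Lemma SY_setT : SY setT.
Proof. by rewrite -setC0; apply: SY_setC; exact: SY_set0. Qed.

Lemma SY_setU A B : SY A -> SY B -> SY (A `|` B).
Proof.
move=> hA hB; rewrite -bigcup2E; apply: SY_bigcup => -[|[|n]] //=.
exact: SY_set0.
Qed.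

Lemma SY_setI A B : SY A -> SY B -> SY (A `&` B).
Proof.
move=> hA hB; rewrite -[A `&` B]setCK setCI; apply: SY_setC.
by apply: SY_setU; apply: SY_setC.
Qed.

Lemma SY_setD A B : SY A -> SY B -> SY (A `\` B).
Proof. by move=> hA hB; rewrite setDE; apply: SY_setI => //; exact: SY_setC. Qed.

Lemma SY_bigcupI (I : countType) (F : I -> set T) : (forall i, SY (F i)) ->
  SY (\bigcup_i F i).
Proof.
move=> hF.
have -> : \bigcup_i F i = \bigcup_n (oapp F set0 (@choice.unpickle I n)).
  apply/seteqP; split => w.
    by move=> [i _ Fi]; exists (choice.pickle i) => //; rewrite choice.pickleK.
  by move=> [n _]; case: (choice.unpickle n) => [i Fi|//]; exists i.
by apply: SY_bigcup => n; case: (choice.unpickle n) => [i|]; [exact: hF|exact: SY_set0].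
Qed.

Lemma SY_bigcapI (I : countType) (F : I -> set T) : (forall i, SY (F i)) ->
  SY (\bigcap_i F i).
Proof.
move=> hF; rewrite -[X in SY X]setCK setC_bigcap; apply: SY_setC.
by apply: SY_bigcupI => i; apply: SY_setC.
Qed.

Lemma P_cylF l B : uniq l -> (forall e, measurable (B e)) ->
  P (cylF l B) = (\prod_(e <- l) P (r e @^-1` B e))%E.
Proof. by move=> ul mB; exact: indep. Qed.

Definition Acyl (c0 : R) := cylF sS (fun _ => [set c0]).

Lemma indep_A c0 C : GY C -> P (Acyl c0 `&` C) = (P (Acyl c0) * P C)%E.
Proof.
move=> [l [B [ul nl mB ->]]].
pose B' e := if e \in sS then [set c0] else B e.
have mB' : forall e, measurable (B' e).
  by move=> e; rewrite /B'; case: ifP => _ //; exact: measurable_set1.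
have uc : uniq (sS ++ l).
  rewrite cat_uniq usS ul /= andbT; apply/hasPn => e /nl //.
have -> : Acyl c0 `&` cylF l B = cylF (sS ++ l) B'.
  apply/seteqP; split => w.
    move=> [h1 h2] e; rewrite /= mem_cat /B' => /orP[eS|el].
      by rewrite eS; apply: h1.
    by rewrite (negbTE (nl _ el)); apply: h2.
  move=> h; split => e el.
    by have := h e; rewrite /= mem_cat el /B' /= el => /(_ isT).
  by have := h e; rewrite /= mem_cat el orbT /B' (negbTE (nl _ el)) => /(_ isT).
have m1 : forall e : E, measurable ((fun _ => [set c0]) e) by move=> e; exact: measurable_set1.
rewrite (P_cylF uc mB') big_cat /= /Acyl (P_cylF usS m1) (P_cylF ul mB).
congr (_ * _)%E.
  by apply: eq_big_seq => e eS; rewrite /B' eS.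
by apply: eq_big_seq => e el; rewrite /B' (negbTE (nl _ el)).
Qed.

Lemma meas_GY C : GY C -> measurable C.
Proof. by move=> [l [B [_ _ mB ->]]]; exact: meas_cylF. Qed.

Lemma SY_indep c0 C : SY C -> measurable C /\ P (Acyl c0 `&` C) = (P (Acyl c0) * P C)%E.
Proof.
move=> hC.
pose H := [set C | measurable C /\ P (Acyl c0 `&` C) = (P (Acyl c0) * P C)%E].
have mA : measurable (Acyl c0) by apply: meas_cylF => e; exact: measurable_set1.
suff : SY `<=` H by move=> /(_ _ hC).
apply: lambda_system_subset.
- exact: GY_setI.
- split.
  + by [].
  + split; first exact: measurableT.
    by rewrite setIT probability_setT mule1.
  + move=> X Y YX [mX hX] [mY hY]; split; first exact: measurableD.
    rewrite setIDA measureD //; last 2 first.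
    * exact: measurableI.
    * by apply: le_lt_trans (probability_le1 _ _) _ => //; [exact: measurableI|exact: ltry].
    rewrite (_ : Acyl c0 `&` X `&` Y = Acyl c0 `&` Y); last first.
      by rewrite -setIA (setIidr YX).
    apply: (@eq_trans _ _ ((P (Acyl c0) * P X) - (P (Acyl c0) * P Y))%E).
      by rewrite -hX -hY.
    rewrite measureD //; last by apply: le_lt_trans (probability_le1 _ _) _ => //; exact: ltry.
    rewrite (setIidr YX) muleBr //; first exact: finP.
    by apply: fin_num_adde_defr; exact: finP.
  + move=> G ndG hG; split.
      by apply: bigcup_measurable => k _; case: (hG k).
    have m1 : forall n, measurable (G n) by move=> n; case: (hG n).
    have c1 := nondecreasing_cvg_mu (mu:=P) m1 (bigcup_measurable (fun k _ => m1 k)) ndG.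
    have m2 : forall n, measurable (Acyl c0 `&` G n) by move=> n; exact: measurableI.
    have nd2 : {homo (fun n => Acyl c0 `&` G n) : n m / (n <= m)%N >-> (n <= m)%O}.
      move=> n m nm; apply/subsetPset; apply: setIS; exact/subsetPset/ndG.
    have c2 := nondecreasing_cvg_mu (mu:=P) m2 (bigcup_measurable (fun k _ => m2 k)) nd2.
    have c3 := cvgeMl (finP mA) c1.
    have e3 : (fun n => P (Acyl c0) * (P \o G) n)%E = (P \o (fun n => Acyl c0 `&` G n)).
      by apply/funext => n /=; case: (hG n) => _ ->.
    rewrite e3 in c3.
    rewrite setI_bigcupr; exact: (cvg_unique (@ereal_hausdorff R) c2 c3).
- by move=> C0 hC0; split; [exact: meas_GY|exact: indep_A].
- by [].
Qed.

End Indep.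
Section Meas.
Variables (V E : countType) (ends : E -> V * V) (R : realType).
Context (d : measure_display) (T : measurableType d).
Variables (r : E -> T -> R) (s : V) (Z : set V) (a b : R) (sS : seq E).
Hypothesis lf : locally_finite ends.
Hypothesis cg : connected_graph ends.
Hypothesis fZ : finite_set Z.
Hypothesis nZ : Z !=set0.
Hypothesis nZs : ~ Z s.
Hypothesis a0 : 0 < a.
Hypothesis ab : a <= b.

Local Notation Fd rho := (eff_res ends rho s Z).

Definition rS (c0 : R) (w : T) : E -> R := fun e => if e \in sS then c0 else r e w.
Definition good : set T := [set w | forall e, e \notin sS -> r e w = a \/ r e w = b].
Definition Uset (c0 c : R) : set T := [set w | good w /\ (Fd (rS c0 w) < c%:E)%E].

Lemma good_SY : SY r sS good.
Proof.
have -> : good = \bigcap_(e : E) (if e \in sS then setT else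
    r e @^-1` [set x | x = a \/ x = b]).
  apply/seteqP; split => w.
    move=> h e _; case: ifP => eS //=; apply: h; by rewrite eS.
  by move=> h e eS; have := h e I; rewrite (negbTE eS).
apply: SY_bigcapI => e; case: ifP => eS; first exact: SY_setT.
apply: SY_GY; exists [:: e], (fun _ => [set x | x = a \/ x = b]); split => //.
- by move=> f; rewrite mem_seq1 => /eqP ->; rewrite eS.
- move=> _; rewrite (_ : [set x | x = a \/ x = b] = [set a] `|` [set b]) //.
  by apply: measurableU; exact: measurable_set1.
- apply/seteqP; split => w.
    by move=> h f; rewrite /= mem_seq1 => /eqP ->.
  by move=> h; apply: h; rewrite /= mem_head.
Qed.

Lemma rS_bounds c0 w : (c0 = a \/ c0 = b) -> good w ->
  forall e, a <= rS c0 w e <= b.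
Proof.
move=> hc gw e; rewrite /rS; case: ifP => eS.
  by case: hc => ->; rewrite ?lexx ab.
by case: (gw e (negbT eS)) => ->; rewrite ?lexx ab.
Qed.

Definition lY (l : seq E) := [seq e <- undup l | e \notin sS].
Definition rv (c0 : R) (v : seq E) : E -> R :=
  fun e => if e \in sS then c0 else if e \in v then b else a.
Definition Bv (v : seq E) : E -> set R := fun e => [set (if e \in v then b else a)].

Lemma U_SY c0 c : (c0 = a \/ c0 = b) -> SY r sS (Uset c0 c).
Proof.
move=> hc.
have -> : Uset c0 c = good `&` \bigcup_(l : seq E) \bigcup_(v : seq E)
   (if `[< (Fd (trunc b l (rv c0 v)) < c%:E)%E >] then cylF r (lY l) (Bv v) else set0).
  apply/seteqP; split => w.
    move=> [gw hF]; split => //.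
    have [l hl] := trunc_lt a0 ab (rS_bounds hc gw) hF.
    exists l => //; exists [seq e <- lY l | r e w == b] => //.
    have eqt : trunc b l (rS c0 w) = trunc b l (rv c0 [seq e <- lY l | r e w == b]).
      apply/funext => e; rewrite /trunc /rS /rv; case: ifP => el //.
      case: ifP => eS //; rewrite mem_filter /lY mem_filter mem_undup el eS /=.
      case: (eqVneq (r e w) b) => [//|ne] /=.
      by case: (gw e (negbT eS)) => // h; rewrite h eqxx in ne.
    rewrite -eqt; move: hl => /asboolP ->.
    move=> e; rewrite /= /lY mem_filter mem_undup => /andP[eS el].
    rewrite /Bv /= mem_filter /lY mem_filter mem_undup el eS /=.
    case: (eqVneq (r e w) b) => [//|ne] /=.
    by case: (gw e eS) => // h; rewrite h eqxx in ne.
  move=> [gw [l _ [v _]]]; case: asboolP => hF // hcyl; split => //.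
  apply: le_lt_trans hF.
  have h1 : (Fd (rS c0 w) <= Fd (trunc b l (rS c0 w)))%E.
    apply: eff_res_mono => e; rewrite /trunc; case: ifP => // _.
    by have /andP[] := rS_bounds hc gw e.
  apply: le_trans h1 _; rewrite (_ : trunc b l (rS c0 w) = trunc b l (rv c0 v)) //.
  apply/funext => e; rewrite /trunc /rS /rv.
  case: ifP => el //; case: ifP => eS //.
  by have := hcyl e; rewrite /= /lY mem_filter eS mem_undup el => /(_ isT).
apply: SY_setI; first exact: good_SY.
apply: SY_bigcupI => l; apply: SY_bigcupI => v.
case: asboolP => _; last exact: SY_set0.
apply: SY_GY; exists (lY l), (Bv v); split => //.
- by rewrite /lY filter_uniq // undup_uniq.
- by move=> e; rewrite /lY mem_filter => /andP[].
- by move=> e; exact: measurable_set1.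
Qed.

Definition Cset (c0 m k : R) : set T :=
  Uset c0 (m - k) `|` (good `\` Uset c0 (m + k)).

Lemma C_SY c0 m k : (c0 = a \/ c0 = b) -> SY r sS (Cset c0 m k).
Proof.
move=> hc; apply: SY_setU; first exact: U_SY.
apply: SY_setD; [exact: good_SY|exact: U_SY].
Qed.

End Meas.
Lemma prod_const_seq (R : realType) (T : Type) (l : seq T) (x : R) :
  \prod_(i <- l) x = x ^+ size l.
Proof.
elim: l => [|a l IH]; first by rewrite big_nil expr0.
by rewrite big_cons IH exprS.
Qed.

Section Final.
Variables (V E : countType) (ends : E -> V * V) (R : realType).
Context (d : measure_display) (T : measurableType d).
Variable P : probability T R.
Variables (r : E -> T -> R) (s : V) (Z : set V) (a b : R).
Hypothesis lf : locally_finite ends.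
Hypothesis nl : no_loops ends.
Hypothesis cg : connected_graph ends.
Hypothesis fZ : finite_set Z.
Hypothesis nZ : Z !=set0.
Hypothesis nZs : ~ Z s.
Hypothesis a0 : 0 < a.
Hypothesis ab : a < b.
Hypothesis meas : forall e, measurable_fun setT (r e).
Hypothesis law : forall e, has_law_two_point P (r e) a b.
Hypothesis indep : mutually_independent P r.
Variable sS : seq E.
Hypothesis usS : uniq sS.
Hypothesis memS : forall e, (e \in sS) = ((ends e).1 == s) || ((ends e).2 == s).

Local Notation Fd rho := (eff_res ends rho s Z).

Lemma D0 : (0 < size sS)%N.
Proof.
have [th [K [_ _ [h1 _ _]]]] := @exists_flow _ _ ends R lf s Z cg fZ nZ nZs.
rewrite lt0n; apply/negP => /eqP /size0nil sS0.
have z1 : \sum_(e <- out_l ends s) th e = 0.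
  apply: big1_seq => e /andP[_]; rewrite mem_out // => h.
  have : e \in sS by rewrite memS h.
  by rewrite sS0.
have z2 : \sum_(e <- in_l ends s) th e = 0.
  apply: big1_seq => e /andP[_]; rewrite mem_in // => h.
  have : e \in sS by rewrite memS h orbT.
  by rewrite sS0.
move: h1; rewrite (netoutE lf) z1 z2 subrr => /esym /eqP.
by rewrite oner_eq0.
Qed.

Lemma P_pre1 e c0 : (c0 = a \/ c0 = b) -> P (r e @^-1` [set c0]) = (2^-1)%:E.
Proof.
move=> hc; rewrite law; last exact: measurable_set1.
rewrite !diracE.
have ne : a != b by rewrite lt_eqF.
case: hc => ->.
  rewrite (_ : (a \in [set a]) = true); last by apply: mem_set.
  rewrite (_ : (b \in [set a]) = false); last by apply: memNset => /= /eqP; rewrite eq_sym (negbTE ne).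
  by rewrite /= mule1 mule0 adde0.
rewrite (_ : (b \in [set b]) = true); last by apply: mem_set.
rewrite (_ : (a \in [set b]) = false); last by apply: memNset => /= /eqP; rewrite (negbTE ne).
by rewrite /= mule1 mule0 add0e.
Qed.

Lemma P_A c0 : (c0 = a \/ c0 = b) -> P (Acyl r sS c0) = ((2^-1) ^+ size sS)%:E.
Proof.
move=> hc; rewrite /Acyl (P_cylF indep usS); last by move=> _; exact: measurable_set1.
rewrite (eq_bigr (fun _ => (2^-1)%:E)); last by move=> e _; exact: P_pre1.
by rewrite prodEFin prod_const_seq.
Qed.

Lemma P_good_big : exists2 N : set T, measurable N /\ P N = 0%E & ~` good r a b sS `<=` N.
Proof.
pose G e := if e \in sS then set0 else r e @^-1` (~` [set x | x = a \/ x = b]).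
have mab : measurable [set x : R | x = a \/ x = b].
  rewrite (_ : [set x | x = a \/ x = b] = [set a] `|` [set b]) //.
  by apply: measurableU; exact: measurable_set1.
have hG : forall e, measurable (G e) /\ P (G e) = 0%E.
  move=> e; rewrite /G; case: ifP => _; first by split => //; exact: measure0.
  split; first by apply: meas_pre => //; exact: measurableC.
  rewrite law; last exact: measurableC.
  rewrite !diracE.
  rewrite (_ : (a \in ~` [set x | x = a \/ x = b]) = false); last first.
    by apply: memNset => /=; apply; left.
  rewrite (_ : (b \in ~` [set x | x = a \/ x = b]) = false); last first.
    by apply: memNset => /=; apply; right.
  by rewrite /= !mule0 adde0.
pose F n := oapp G set0 (@choice.unpickle E n).
have : P.-negligible (\bigcup_n F n).
  apply: negligible_bigcup => n; rewrite /F; case: (choice.unpickle n) => [e|] /=.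
    by exists (G e); have [? ?] := hG e; split.
  by exists set0; split => //; exact: measure0.
move=> [N [mN PN sub]]; exists N => //.
move=> w ngw; apply: sub.
have [e eS he] : exists2 e, e \notin sS & ~ (r e w = a \/ r e w = b).
  apply: contra_notP ngw => h f fS; apply: contra_notP h => hf; by exists f.
exists (choice.pickle e) => //; rewrite /F choice.pickleK /= /G (negbTE eS).
exact: he.
Qed.

End Final.
Section Final2.
Variables (V E : countType) (ends : E -> V * V) (R : realType).
Context (d : measure_display) (T : measurableType d).
Variable P : probability T R.
Variables (r : E -> T -> R) (s : V) (Z : set V) (a b : R).
Hypothesis lf : locally_finite ends.
Hypothesis nl : no_loops ends.
Hypothesis cg : connected_graph ends.
Hypothesis fZ : finite_set Z.
Hypothesis nZ : Z !=set0.
Hypothesis nZs : ~ Z s.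
Hypothesis a0 : 0 < a.
Hypothesis ab : a < b.
Hypothesis meas : forall e, measurable_fun setT (r e).
Hypothesis law : forall e, has_law_two_point P (r e) a b.
Hypothesis indep : mutually_independent P r.
Variable sS : seq E.
Hypothesis usS : uniq sS.
Hypothesis memS : forall e, (e \in sS) = ((ends e).1 == s) || ((ends e).2 == s).

Local Notation Fd rho := (eff_res ends rho s Z).

Lemma var_bound :
  ((((b - a) / (size sS)%:R ^+ 2 / 2) ^+ 2 * (2^-1) ^+ size sS)%:E <=
   'V_P[fun w => fine (Fd (fun e => r e w))])%E.
Proof.
have Dp := D0 R lf cg fZ nZ nZs memS.
have abl : a <= b := ltW ab.
set X := fun w => fine (Fd (fun e => r e w)).
set delta := (b - a) / (size sS)%:R ^+ 2.
set k := delta / 2.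
set h := (2^-1 : R) ^+ size sS.
have k0 : 0 <= k by rewrite /k /delta !divr_ge0 // ?subr_ge0 // exprn_ge0.
rewrite /variance unlock unlock.
set m := fine _.
pose Ca := Cset ends r s Z a b sS a m k.
pose Cb := Cset ends r s Z a b sS b m k.
pose Aa := Acyl r sS a.
pose Ab := Acyl r sS b.
have ha : a = a \/ a = b by left.
have hb : b = a \/ b = b by right.
have [mCa iCa] := SY_indep usS meas indep a (C_SY ends s Z a0 abl m k ha).
have [mCb iCb] := SY_indep usS meas indep b (C_SY ends s Z a0 abl m k hb).
have mAa : measurable Aa by apply: meas_cylF => // e; exact: measurable_set1.
have mAb : measurable Ab by apply: meas_cylF => // e; exact: measurable_set1.
pose U := (Aa `&` Ca) `|` (Ab `&` Cb).
have mU : measurable U by apply: measurableU; exact: measurableI.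
have key : forall c0 w, (c0 = a \/ c0 = b) -> Acyl r sS c0 w ->
    Cset ends r s Z a b sS c0 m k w -> k ^+ 2 <= (X w - m) * (X w - m).
  move=> c0 w hc hA hC.
  have eqr : (fun e => r e w) = rS r sS c0 w.
    apply/funext => e; rewrite /rS; case: ifP => // eS; exact: hA.
  have gw : good r a b sS w by case: hC => [[]|[]].
  have fin : Fd (rS r sS c0 w) \is a fin_num.
    apply: eff_res_fin => // e.
    by have /andP[h1 _] := rS_bounds abl hc gw e; exact: le_trans (ltW a0) h1.
  have eX : Fd (rS r sS c0 w) = (X w)%:E by rewrite /X eqr fineK.
  case: hC => [[_ hx]|[_ hn]].
    have : X w < m - k by rewrite -lte_fin -eX.
    by move=> hx'; rewrite -expr2; nra.
  have : ~ (X w < m + k).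
    by move=> hx'; apply: hn; split => //; rewrite eX lte_fin.
  by move/negP; rewrite -leNgt => hx'; rewrite -expr2; nra.
have hV : ((k ^+ 2)%:E * P U <= \int[P]_w (((X \- cst m) * (X \- cst m)) w)%:E)%E.
  apply: integral_lb => //; first exact: sqr_ge0.
    by move=> w /=; rewrite -expr2 sqr_ge0.
  move=> w [[hA hC]|[hA hC]] /=; [exact: (key a)|exact: (key b)].
have disj : Aa `&` Ab = set0.
  apply/seteqP; split => // w [hA hB].
  have [e eS] : exists e, e \in sS by case: sS Dp => // e l _; exists e; rewrite mem_head.
  have := hA e eS; have := hB e eS; rewrite /= => -> hba.
  by move: ab; rewrite hba ltxx.
have PU : P U = (P Aa * P Ca + P Ab * P Cb)%E.
  transitivity (P (Aa `&` Ca) + P (Ab `&` Cb))%E; last by rewrite iCa iCb.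
  apply: measureU; [exact: measurableI|exact: measurableI|].
  apply/seteqP; split => // w [[h1 _] [h2 _]]; rewrite -disj; by split.
have [N [mN PN] subN] := P_good_big meas law sS.
have gsub : good r a b sS `<=` Ca `|` Cb.
  move=> w gw.
  have fin : forall c0, (c0 = a \/ c0 = b) -> Fd (rS r sS c0 w) \is a fin_num.
    move=> c0 hc; apply: eff_res_fin => // e.
    by have /andP[h1 _] := rS_bounds abl hc gw e; exact: le_trans (ltW a0) h1.
  have inc : (Fd (rS r sS a w) + delta%:E <= Fd (rS r sS b w))%E.
    apply: (eff_res_incr lf nl Z usS memS Dp).
    - move=> e; rewrite /rS; case: ifP => eS; first exact: ltW.
      by case: (gw e (negbT eS)) => ->; [exact: ltW|exact: le_trans (ltW a0) abl].
    - by move=> e; rewrite /rS; case: ifP.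
    - by move=> e eS; rewrite /rS eS subrKC.
    - by rewrite subr_ge0.
  move: inc (fin a ha) (fin b hb).
  case Ea : (Fd (rS r sS a w)) => [xa| |] //; case Eb : (Fd (rS r sS b w)) => [xb| |] //.
  move=> inc _ _; rewrite -EFinD lee_fin in inc.
  case: (pselect ((xa%:E < (m - k)%:E)%E)) => [hl|hl].
    by left; left; split => //; rewrite Ea.
  case: (pselect ((xa%:E < (m + k)%:E)%E)) => [hu|hu].
    right; right; split => // -[_]; rewrite Eb lte_fin => hxb.
    move: hl hu; rewrite !lte_fin => /negP; rewrite -leNgt => hl hu.
    have : delta = 2 * k by rewrite /k; field.
    move=> dk; lra.
  by left; right; split => // -[_]; rewrite Ea.
have h0 : 0 <= h by rewrite /h exprn_ge0 // invr_ge0.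
have hPU : (h%:E <= P U)%E.
  rewrite PU (P_A ab law indep usS ha) (P_A ab law indep usS hb) -muleDr //; last first.
    by apply: fin_num_adde_defr; exact: finP.
  rewrite -[X in (X <= _)%E]mule1; apply: lee_wpmul2l; first by rewrite lee_fin.
  have mCU : measurable (Ca `|` Cb) by exact: measurableU.
  have s1 : ~` N `<=` Ca `|` Cb.
    move=> w nNw; apply: gsub; apply: contra_notP nNw => ngw; exact: subN.
  apply: (@le_trans _ _ (P (~` N))).
    by rewrite probability_setC // PN sube0.
  apply: (@le_trans _ _ (P (Ca `|` Cb))).
    exact: (le_measure P (mem_set (measurableC mN)) (mem_set mCU) s1).
  exact: measureU2.
apply: le_trans hV; rewrite EFinM; apply: lee_wpmul2l => //.
by rewrite lee_fin sqr_ge0.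
Qed.

End Final2.
Unset Implicit Arguments.
Set Strict Implicit.
Theorem lemma2 (R : realType) (D : nat) :
  exists C : R, 0 < C /\
  forall (V E : countType) (ends : E -> V * V) (s : V) (Z : set V) (a b : R)
         (d : measure_display) (T : measurableType d) (P : probability T R)
         (r : E -> T -> R),
    no_loops ends -> locally_finite ends -> connected_graph ends ->
    has_degree ends s D ->
    finite_set Z -> Z !=set0 -> ~ Z s ->
    0 < a -> a <= b ->
    (forall e, measurable_fun setT (r e)) ->
    (forall e, has_law_two_point P (r e) a b) ->
    mutually_independent P r ->
    ('V_P[fun w => fine (eff_res ends (fun e => r e w) s Z)]
       >= (C * (b - a) ^+ 2)%:E)%E.
Proof.
have D1 : (0 < maxn D 1)%N by rewrite leq_max orbT.
exists (((maxn D 1)%:R ^+ 4)^-1 / 4 * (2^-1) ^+ D); split.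
  by rewrite !mulr_gt0 ?invr_gt0 ?exprn_gt0 ?ltr0n // invr_gt0.
move=> V E ends s Z a b d T P r nl lf cg hdeg fZ nZ nZs a0 ab meas law indep.
case: (ltP a b) => [ab'|ba]; last first.
  have -> : b = a by apply/eqP; rewrite eq_le ab ba.
  by rewrite subrr expr0n /= mulr0 variance_ge0.
set S := [set e | incident ends s e].
have finS : finite_set S by apply/finite_setP; exists D.
pose sS : seq E := fset_set S.
have usS : uniq sS by exact: fset_uniq.
have memS : forall e, (e \in sS) = ((ends e).1 == s) || ((ends e).2 == s).
  move=> e; rewrite /sS in_fset_set //; apply/idP/idP.
    by move=> /set_mem [h|h]; apply/orP; [left|right]; apply/eqP.
  by move=> /orP [/eqP h|/eqP h]; apply: mem_set; [left|right].
have hsz : size sS = D by exact: card_fset_set.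
have Dp := D0 R lf cg fZ nZ nZs memS.
have := var_bound lf nl cg fZ nZ nZs a0 ab' meas law indep usS memS.
rewrite hsz; apply: le_trans; rewrite lee_fin.
have DD : maxn D 1 = D by apply/maxn_idPl; rewrite -hsz.
have Dn0 : D%:R != 0 :> R by rewrite pnatr_eq0 -lt0n -hsz.
rewrite DD le_eqVlt; apply/orP; left; apply/eqP.
by field.
Qed.
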